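(* Let $\Bbbk$ be a field of characteristic $0$, $\mathrm{Var}$ a variety of algebras defined by multilinear identities, and let $f=f(x_1,\dots,x_n)\in\mathrm{DiAlg0}\langle X\rangle$ be multilinear with $f=\Psi^{x_j}(\bar f)$ for some $j$. Then $f\in T_0(\mathrm{DiVar})$ if and only if $\bar f\in T_0(\mathrm{Var})$.
   Context: $\mathrm{Alg}\langle X\rangle$ is the free nonassociative algebra on a countable set $X=\{x_1,x_2,\dots\}$; $T_0(\mathrm{Var})$ is the set of multilinear elements of $\mathrm{Alg}\langle X\rangle$ vanishing identically on all algebras of $\mathrm{Var}$. A 0-dialgebra is a vector space with bilinear $\vdash,\dashv$ satisfying $(x\dashv y)\vdash z=(x\vdash y)\vdash z$, $x\dashv(y\vdash z)=x\dashv(y\dashv z)$; $\mathrm{DiAlg0}\langle X\rangle$ is the free 0-dialgebra. For $f\in\mathrm{DiAlg0}\langle X\rangle$, $\bar f\in\mathrm{Alg}\langle X\rangle$ is obtained by identifying $\vdash$ and $\dashv$ with the ordinary product. For a multilinear $g\in\mathrm{Alg}\langle X\rangle$ containing $x_i$, $\Psi^{x_i}(g)$ is obtained by replacing each product $uv$ in each monomial by $u\dashv v$ if $x_i$ occurs in $u$ and by $u\vdash v$ otherwise. $\mathrm{DiVar}$ is the class of 0-dialgebras satisfying $\Psi^{x_i}(g)=0$ for all $g\in T_0(\mathrm{Var})$ of degree $n$ and all $i=1,\dots,n$. $T_0(\mathrm{DiVar})$ is the set of multilinear elements of $\mathrm{DiAlg0}\langle X\rangle$ vanishing identically on all dialgebras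 in $\mathrm{DiVar}$. *)

(* Defs.v *)
From HB Require Import structures.
From mathcomp Require Import all_boot all_order all_algebra.
Set Implicit Arguments. Unset Strict Implicit. Unset Printing Implicit Defensive.
Import GRing.Theory.
Local Open Scope ring_scope.

(* Nonassociative monomials in Alg<X>: binary trees, leaf i = variable x_i. *)
Inductive ntree := Leaf of nat | Node of ntree & ntree.
(* Dialgebra monomials: DL u v = u -| v ,  DR u v = u |- v. *)
Inductive dtree := DLeaf of nat | DL of dtree & dtree | DR of dtree & dtree.

Fixpoint leaves (t : ntree) : seq nat :=
  match t with Leaf i => [:: i] | Node u v => leaves u ++ leaves v end.
Fixpoint dleaves (t : dtree) : seq nat :=
  match t with DLeaf i => [:: i] | DL u v => dleaves u ++ dleaves v
             | DR u v => dleaves u ++ dleaves v end.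

(* Elements are represented by finite formal linear combinations of monomials. *)
Definition apoly (K : Type) := seq (K * ntree).
Definition dpoly (K : Type) := seq (K * dtree).

Definition multilin (K : Type) (vs : seq nat) (p : apoly K) : Prop :=
  uniq vs /\ all (fun q => perm_eq (leaves q.2) vs) p.
Definition dmultilin (K : Type) (vs : seq nat) (p : dpoly K) : Prop :=
  uniq vs /\ all (fun q => perm_eq (dleaves q.2) vs) p.

Definition bilinear (K : fieldType) (V : lmodType K) (m : V -> V -> V) : Prop :=
  (forall (a : K) x y z, m (a *: x + y) z = a *: m x z + m y z) /\
  (forall (a : K) x y z, m x (a *: y + z) = a *: m x y + m x z).

Fixpoint evaln (K : fieldType) (V : lmodType K) (m : V -> V -> V)
  (e : nat -> V) (t : ntree) : V :=
  match t with Leaf i => e i | Node u v => m (evaln m e u) (evaln m e v) end.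
Fixpoint evald (K : fieldType) (V : lmodType K) (dl dr : V -> V -> V)
  (e : nat -> V) (t : dtree) : V :=
  match t with DLeaf i => e i
  | DL u v => dl (evald dl dr e u) (evald dl dr e v)
  | DR u v => dr (evald dl dr e u) (evald dl dr e v) end.

Definition evalA (K : fieldType) (V : lmodType K) (m : V -> V -> V)
  (e : nat -> V) (p : apoly K) : V := \sum_(q <- p) q.1 *: evaln m e q.2.
Definition evalD (K : fieldType) (V : lmodType K) (dl dr : V -> V -> V)
  (e : nat -> V) (p : dpoly K) : V := \sum_(q <- p) q.1 *: evald dl dr e q.2.

Definition dialg0 (K : fieldType) (V : lmodType K) (dl dr : V -> V -> V) : Prop :=
  bilinear dl /\ bilinear dr /\
  (forall x y z, dr (dl x y) z = dr (dr x y) z) /\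
  (forall x y z, dl x (dr y z) = dl x (dl y z)).

(* Equality in the free 0-dialgebra DiAlg0<X> (the relatively free algebra of
   the variety of 0-dialgebras): two formal expressions are equal iff their
   difference is an identity of all 0-dialgebras. *)
Definition dieq (K : fieldType) (f g : dpoly K) : Prop :=
  forall (V : lmodType K) (dl dr : V -> V -> V), dialg0 dl dr ->
  forall e : nat -> V, evalD dl dr e f = evalD dl dr e g.

Fixpoint dbar (t : dtree) : ntree :=
  match t with DLeaf i => Leaf i | DL u v => Node (dbar u) (dbar v)
             | DR u v => Node (dbar u) (dbar v) end.
Definition bar (K : Type) (f : dpoly K) : apoly K := [seq (q.1, dbar q.2) | q <- f].

Fixpoint psit (i : nat) (t : ntree) : dtree :=
  match t with Leaf k => DLeaf k
  | Node u v => if i \in leaves u then DL (psit i u) (psit i v)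
                else DR (psit i u) (psit i v) end.
Definition Psi (K : Type) (i : nat) (g : apoly K) : dpoly K :=
  [seq (q.1, psit i q.2) | q <- g].

Definition inVar (K : fieldType) (S : apoly K -> Prop)
  (V : lmodType K) (m : V -> V -> V) : Prop :=
  bilinear m /\ forall s, S s -> forall e : nat -> V, evalA m e s = 0.

Definition T0Var (K : fieldType) (S : apoly K -> Prop) (g : apoly K) : Prop :=
  (exists vs, multilin vs g) /\
  forall (V : lmodType K) (m : V -> V -> V), inVar S m ->
  forall e : nat -> V, evalA m e g = 0.

Definition inDiVar (K : fieldType) (S : apoly K -> Prop)
  (V : lmodType K) (dl dr : V -> V -> V) : Prop :=
  dialg0 dl dr /\
  forall (g : apoly K) (vs : seq nat), multilin vs g -> T0Var S g ->
  forall i, i \in vs -> forall e : nat -> V, evalD dl dr e (Psi i g) = 0.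

Definition T0DiVar (K : fieldType) (S : apoly K -> Prop) (f : dpoly K) : Prop :=
  (exists vs, dmultilin vs f) /\
  forall (V : lmodType K) (dl dr : V -> V -> V), inDiVar S dl dr ->
  forall e : nat -> V, evalD dl dr e f = 0.

(* Main.v *)
Require Import Defs.
From mathcomp Require Import all_boot all_order all_algebra.

Lemma evald_same (K : fieldType) (V : lmodType K) (m : V -> V -> V) e t :
  evald m m e t = evaln m e (dbar t).
Proof. by elim: t => //= u -> v ->. Qed.

Lemma evald_psit (K : fieldType) (V : lmodType K) (m : V -> V -> V) e i t :
  evald m m e (psit i t) = evaln m e t.
Proof. by elim: t => //= u IHu v IHv; case: ifP => _ /=; rewrite IHu IHv. Qed.

Lemma leaves_dbar t : leaves (dbar t) = dleaves t.
Proof. by elim: t => //= u -> v ->. Qed.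

Lemma evalD_bar (K : fieldType) (V : lmodType K) (m : V -> V -> V) e (f : dpoly K) :
  evalD m m e f = evalA m e (bar f).
Proof.
rewrite /evalD /evalA /bar big_map; apply: eq_bigr => q _.
by rewrite evald_same.
Qed.

Lemma evalD_Psi (K : fieldType) (V : lmodType K) (m : V -> V -> V) e i (g : apoly K) :
  evalD m m e (Psi i g) = evalA m e g.
Proof.
rewrite /evalD /evalA /Psi big_map; apply: eq_bigr => q _.
by rewrite evald_psit.
Qed.

Lemma multilin_bar (K : Type) vs (f : dpoly K) : dmultilin vs f -> multilin vs (bar f).
Proof.
case=> u a; split => //; rewrite /bar all_map; apply: sub_all a => q /=.
by rewrite leaves_dbar.
Qed.

Theorem mainTheorem12 (K : fieldType) (S : apoly K -> Prop) (n : nat)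
  (f : dpoly K) (j : nat) :
  [pchar K]%R =i pred0 ->
  (forall s, S s -> exists vs, multilin vs s) ->
  dmultilin (iota 1 n) f ->
  (1 <= j <= n)%N ->
  dieq f (Psi j (bar f)) ->
  (T0DiVar S f <-> T0Var S (bar f)).
Proof.
move=> _ _ Hml Hj Heq; split.
- case=> _ H; split; first by exists (iota 1 n); exact: multilin_bar.
  move=> V m HV e; rewrite -evalD_bar; apply: H; split.
    by case: HV => Hb _; do 2!split => //.
  move=> g vs _ [_ Hg] i _ e'; rewrite evalD_Psi; exact: Hg.
- move=> HT; split; first by exists (iota 1 n).
  move=> V dl dr [Hd HV] e; rewrite (Heq V dl dr Hd e).
  apply: (HV _ (iota 1 n)) => //; first exact: multilin_bar.
  rewrite mem_iota; case/andP: Hj => h1 h2; apply/andP; split => //; by rewrite addnC addn1 ltnS.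
Qed.
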